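(* Let $F>1$ and $s>0$ be constants. Consider the self-adjusting $(1,\lambda)$ EA (defined in the context) with update strength $F$ and success rate $s$, using either standard bit mutation with mutation probability $p\in O(1/n)\cap n^{-O(1)}$ or the heavy-tailed mutation operator with a constant $\beta>1$, on an everywhere hard function $f$ with constant $\varepsilon$ and $d+1=n^{o(\log n)}$ function values. Let $\gamma>1$ be a constant such that $p_x^-\le\gamma^{-1}$ for all non-optimal $x$, and define \[\lambda_1:=4\max\left(\log_\gamma(2d(s+1)),\,\log_\gamma(n\log n)\right),\qquad \lambda_2:=n^{\varepsilon/2}.\] Consider the algorithm at some time $t^*$ with $\lambda_{t^*}\ge\lambda_2$. Then the probability that within the next $n^{o(\log n)}$ generations the offspring population size drops below $\lambda_1$ is at most $n^{-\Omega(\log n)}$.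
   Context: Search space $\{0,1\}^n$; asymptotics with respect to $n\to\infty$. W.l.o.g. $f$ takes values in $\{0,\dots,d\}$ with global optima at value $d$. Self-adjusting $(1,\lambda)$ EA: maintains a search point $x$ and real-valued $\lambda$ (rounded to a nearest integer when needed); $\lambda_t$ is the value in generation $t$. Each generation creates $\lambda$ offspring independently by mutating $x$, picks an offspring $y$ of maximum fitness (ties uniformly at random), sets $x\leftarrow y$ in any case, and sets $\lambda\leftarrow\max\{1,\lambda/F\}$ if $f(y)>f(x)$ and $\lambda\leftarrow F^{1/s}\lambda$ otherwise. Standard bit mutation with probability $p$ flips each bit independently with probability $p$. Heavy-tailed mutation with $\beta>1$ draws $\chi\in\{1,\dots,n/2\}$ with $\Pr[\chi=i]=i^{-\beta}/\sum_{j=1}^{n/2}j^{-\beta}$ and then does standard bit mutation with probability $\chi/n$. For these operators such a constant $\gamma>1$ exists. $p_x^+$ (resp. $p_x^-$) is the probability that a single offspring of $x$ has strictly larger (resp. smaller) fitness than $x$; $p_{\max}:=\max\{p_x^+ : f(x)<d\}$. $f$ is everywhere hard with constant $\varepsilon\in(0,1)$ if $p_{\max}=O(n^{-\varepsilon})$. *)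

(* Defs.v *)
From HB Require Import structures.
From mathcomp Require Import all_boot all_order all_algebra.
From mathcomp Require Import reals exp.
Set Implicit Arguments. Unset Strict Implicit. Unset Printing Implicit Defensive.
Import Order.TTheory GRing.Theory Num.Theory.
Local Open Scope ring_scope.

Section EA.
Variable R : realType.

Definition bits (n : nat) := {ffun 'I_n -> bool}.

Definition hamming n (x y : bits n) : nat := #|[set i | x i != y i]|.

(* mutation operator: mut x y = probability that mutating x yields y *)
Definition mutop := forall n, bits n -> bits n -> R.

Definition std_mut (p : nat -> R) : mutop := fun n x y =>
  p n ^+ hamming x y * (1 - p n) ^+ (n - hamming x y).

(* heavy-tailed mutation with parameter beta: chi in {1,..,n/2} with
   Pr[chi = i] = i^-beta / sum_j j^-beta, then standard bit mutation with chi/n *)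
Definition heavy_mut (beta : R) : mutop := fun n x y =>
  let C := \sum_(1 <= j < (n %/ 2).+1) (j%:R : R) `^ (- beta) in
  \sum_(1 <= i < (n %/ 2).+1)
    ((i%:R : R) `^ (- beta) / C) *
    ((i%:R / n%:R) ^+ hamming x y * (1 - i%:R / n%:R) ^+ (n - hamming x y)).

Definition p_plus n (mut : mutop) (f : bits n -> nat) (x : bits n) : R :=
  \sum_(y : bits n | (f x < f y)%N) mut n x y.
Definition p_minus n (mut : mutop) (f : bits n -> nat) (x : bits n) : R :=
  \sum_(y : bits n | (f y < f x)%N) mut n x y.

Definition nround (lam : R) : nat := `|Num.floor (lam + 2^-1)|%N.

(* probability that the offspring selected in one generation of the
   (1,lambda) EA from parent x with k offspring equals y: the k offspring
   Y 0, ..., Y (k-1) are independent mutants of x; an offspring of maximal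
   fitness is chosen, ties broken uniformly at random *)
Definition select_prob n (mut : mutop) (f : bits n -> nat) (x : bits n)
    (k : nat) (y : bits n) : R :=
  \sum_(Y : {ffun 'I_k -> bits n})
    (\prod_(i < k) mut n x (Y i)) *
    (let m := (\max_(i < k) f (Y i))%N in
     if f y == m then
       (#|[set i | Y i == y]|%:R / #|[set i | f (Y i) == m]|%:R)
     else 0).

Definition lam_update (F s : R) (improved : bool) (lam : R) : R :=
  if improved then Num.max 1 (lam / F) else F `^ (s^-1) * lam.

(* probability that, starting from parent x and current population size lam,
   within the next T generations the offspring population size drops below L *)
Fixpoint drop_prob n (mut : mutop) (f : bits n -> nat) (F s L : R)
    (T : nat) (x : bits n) (lam : R) : R :=
  match T with
  | 0 => 0
  | T'.+1 =>
      \sum_(y : bits n)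
        select_prob mut f x (nround lam) y *
        (let lam' := lam_update F s (f x < f y)%N lam in
         if lam' < L then 1 else drop_prob mut f F s L T' y lam')
  end.

Definition logb (b x : R) : R := ln x / ln b.

(* g(n) = n^{o(log n)} (with natural log): for every delta > 0,
   eventually g n <= n^(delta * ln n) *)
Definition quasi_small (g : nat -> nat) : Prop :=
  forall delta : R, 0 < delta -> exists N : nat, forall n : nat, (N <= n)%N ->
    (g n)%:R <= (n%:R : R) `^ (delta * ln (n%:R : R)).

End EA.

(* Main.v *)
Require Import Defs.
From HB Require Import structures.
From mathcomp Require Import all_boot all_order all_algebra.
From mathcomp Require Import reals exp.
From mathcomp Require Import sequences.
From mathcomp Require Import ring lra.
Import Order.TTheory GRing.Theory Num.Theory.
Local Open Scope ring_scope.
Set Implicit Arguments. Unset Strict Implicit.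

Section S.
Variable R : realType.

Lemma std_prod n (q : R) (x y : bits n) :
  q ^+ hamming x y * (1 - q) ^+ (n - hamming x y) =
  \prod_(j < n) (if x j != y j then q else 1 - q).
Proof.
rewrite (bigID (fun j => x j != y j)) /=.
rewrite (eq_bigr (fun=> q)); last by move=> j ->.
rewrite [X in _ = _ * X](eq_bigr (fun=> 1 - q)); last by move=> j /negbTE ->.
rewrite !prodr_const.
have -> : hamming x y = #|[pred j | x j != y j]| by rewrite /hamming cardsE.
congr (_ * _ ^+ _).
have HC := cardC [pred j : 'I_n | x j != y j].
rewrite card_ord in HC.
rewrite -[X in (X - _)%N]HC addKn; apply: eq_card => j //.
Qed.

Lemma std_sum n (q : R) (x : bits n) :
  \sum_(y : bits n) q ^+ hamming x y * (1 - q) ^+ (n - hamming x y) = 1.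
Proof.
have H := @bigA_distr_bigA R 0 1 *%R +%R 'I_n bool (fun (j : 'I_n) (b : bool) => if x j != b then q else 1 - q).
rewrite /= in H.
transitivity (\prod_(j < n) \sum_(b : bool) (if x j != b then q else 1 - q)).
  rewrite H; apply: eq_bigr => y _; exact: std_prod.
rewrite big1 // => j _; rewrite big_bool /=.
by case: (x j) => /=; rewrite ?subrK // addrC subrK.
Qed.


Lemma divn01 (i n : nat) : (i <= n)%N -> 0 <= (i%:R / n%:R : R) <= 1.
Proof.
move=> hin; apply/andP; split; first by rewrite divr_ge0.
case: n hin => [|n] hin; first by rewrite invr0 mulr0.
by rewrite ler_pdivrMr ?ltr0Sn // mul1r ler_nat.
Qed.

Lemma std_ge0 n (q : R) (x y : bits n) : 0 <= q <= 1 ->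
  0 <= q ^+ hamming x y * (1 - q) ^+ (n - hamming x y).
Proof.
by case/andP=> h0 h1; rewrite mulr_ge0 // exprn_ge0 // subr_ge0.
Qed.

Definition mut_dist (mut : mutop R) :=
  (forall n x y, 0 <= mut n x y) /\ (forall n x, \sum_(y : bits n) mut n x y <= 1).

Lemma std_dist (p : nat -> R) : (forall n, 0 <= p n <= 1) -> mut_dist (std_mut p).
Proof.
move=> hp; split=> n x *; rewrite /std_mut; first exact: std_ge0.
by rewrite std_sum.
Qed.

Lemma heavy_dist (beta : R) : mut_dist (@heavy_mut R beta).
Proof.
split=> n x *; rewrite /heavy_mut /=.
  rewrite big_nat_cond; apply: sumr_ge0 => i /andP[/andP[_ hi] _].
  have hin : (i <= n)%N.
    by apply: leq_trans (leq_div n 2); rewrite -ltnS.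
  rewrite mulr_ge0 //; first by rewrite divr_ge0 ?powR_ge0 //; apply: sumr_ge0 => j _; rewrite powR_ge0.
  exact/std_ge0/divn01.
rewrite exchange_big /=.
set C := \sum_(1 <= j < (n %/ 2).+1) (j%:R : R) `^ (- beta).
rewrite (eq_bigr (fun i => (i%:R `^ (- beta)) / C)); last first.
  by move=> i _; rewrite -mulr_sumr std_sum mulr1.
rewrite -mulr_suml -/C.
have [->|C0] := eqVneq C 0; first by rewrite mul0r.
by rewrite mulfV.
Qed.

End S.


Section S2.
Variable R : realType.
Variable T : finType.
Variable g : T -> R.
Variable f : T -> nat.
Hypothesis g0 : forall t, 0 <= g t.
Hypothesis g1 : \sum_t g t <= 1.

Definition Sfun k (Y : {ffun 'I_k -> T}) (y : T) : R :=
  let m := (\max_(i < k) f (Y i))%N in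
  if f y == m then (#|[set i | Y i == y]|%:R / #|[set i | f (Y i) == m]|%:R)
  else 0.

Definition sp k (y : T) := \sum_(Y : {ffun 'I_k -> T}) (\prod_(i < k) g (Y i)) * Sfun Y y.

Lemma card_sum (I : finType) (P : pred I) : #|[set i | P i]| = (\sum_i (P i : nat))%N.
Proof.
rewrite cardsE -sum1_card big_mkcond /=; apply: eq_bigr => i _.
by rewrite unfold_in; case: (P i).
Qed.

Lemma Sfun_ge0 k Y y : 0 <= @Sfun k Y y.
Proof. by rewrite /Sfun /=; case: ifP => // _; rewrite divr_ge0. Qed.

Lemma Sfun_sum k Y : \sum_y @Sfun k Y y <= 1.
Proof.
set m := (\max_(i < k) f (Y i))%N.
set tot := #|[set i | f (Y i) == m]|.
have E : (\sum_y ((f y == m) * #|[set i | Y i == y]|) = tot)%N.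
  rewrite /tot card_sum.
  rewrite (eq_bigr (fun y => \sum_i ((f y == m) * (Y i == y))%N)); last first.
    by move=> y _; rewrite card_sum big_distrr.
  rewrite exchange_big /=; apply: eq_bigr => i _.
  rewrite (bigD1 (Y i)) //= eqxx muln1 big1 ?addn0 // => y /negbTE.
  by rewrite eq_sym => ->; rewrite muln0.
rewrite (eq_bigr (fun y => ((f y == m) * #|[set i | Y i == y]|)%N%:R / tot%:R)); last first.
  by move=> y _; rewrite /Sfun -/m -/tot; case: (f y == m); rewrite ?mul0n ?mul0r ?mul1n.
rewrite -mulr_suml -natr_sum E.
have [->|C0] := eqVneq (tot%:R : R) 0; first by rewrite invr0 mulr0.
by rewrite mulfV.
Qed.

Lemma prod_sum_le1 k : \sum_(Y : {ffun 'I_k -> T}) \prod_(i < k) g (Y i) <= 1.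
Proof.
have H := @bigA_distr_bigA R 0 1 *%R +%R 'I_k T (fun _ t => g t).
rewrite /= in H; rewrite -H.
apply: prodr_ile1 => i _; rewrite g1 andbT; exact: sumr_ge0.
Qed.

Lemma sp_ge0 k y : 0 <= sp k y.
Proof.
by apply: sumr_ge0 => Y _; rewrite mulr_ge0 ?Sfun_ge0 // prodr_ge0.
Qed.

Lemma sp_sum k : \sum_y sp k y <= 1.
Proof.
rewrite /sp exchange_big /=.
apply: le_trans (prod_sum_le1 k); apply: ler_sum => Y _.
rewrite -mulr_sumr; apply: ler_piMr; last exact: Sfun_sum.
exact: prodr_ge0.
Qed.


Lemma Sfun_succ k Y (f0 : nat) :
  \sum_(y | (f0 < f y)%N) @Sfun k Y y <= \sum_(i < k) ((f0 < f (Y i))%N)%:R.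
Proof.
have [/existsP [i Hi]|Hn] := boolP [exists i, (f0 < f (Y i))%N].
  apply: (@le_trans _ _ 1).
    apply: le_trans (Sfun_sum Y).
    rewrite [X in _ <= X](bigID (fun y => (f0 < f y)%N)) /= lerDl.
    by apply: sumr_ge0 => y _; exact: Sfun_ge0.
  rewrite (bigD1 i) //= Hi lerDl.
  by apply: sumr_ge0 => j _; rewrite ler0n.
rewrite big1; first by apply: sumr_ge0 => j _; rewrite ler0n.
move=> y Hy; rewrite /Sfun /=.
have Hm : (\max_(i < k) f (Y i) <= f0)%N.
  apply/bigmax_leqP => i _; rewrite leqNgt; apply/negP => Hi.
  by move/negP: Hn; apply; apply/existsP; exists i.
by case: eqP => // E; move: Hy; rewrite E ltnNge Hm.
Qed.

Lemma prod_single k (i : 'I_k) (P : pred T) :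
  \sum_(Y : {ffun 'I_k -> T}) (\prod_(j < k) g (Y j)) * (P (Y i))%:R
  <= \sum_(t | P t) g t.
Proof.
pose G := fun (j : 'I_k) t => g t * (if j == i then (P t)%:R else 1).
have E : forall Y : {ffun 'I_k -> T},
   (\prod_(j < k) g (Y j)) * (P (Y i))%:R = \prod_(j < k) G j (Y j).
  move=> Y; rewrite /G big_split /=; congr (_ * _).
  rewrite (bigD1 i) //= eqxx big1 ?mulr1 // => j /negbTE ->; done.
rewrite (eq_bigr (fun Y : {ffun 'I_k -> T} => \prod_(j < k) G j (Y j))); last by move=> Y _; exact: E.
have H := @bigA_distr_bigA R 0 1 *%R +%R 'I_k T G.
rewrite /= in H; rewrite -H (bigD1 i) //=.
have -> : \sum_t G i t = \sum_(t | P t) g t.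
  rewrite [RHS]big_mkcond /=; apply: eq_bigr => t _; rewrite /G eqxx.
  by case: (P t); rewrite ?mulr1 ?mulr0.
have Hs : 0 <= \sum_(t | P t) g t by apply: sumr_ge0.
apply: ler_piMr => //.
apply: prodr_ile1 => j /negbTE ji; rewrite /G ji.
rewrite (eq_bigr g); last by move=> t _; rewrite mulr1.
by rewrite g1 andbT; apply: sumr_ge0.
Qed.

Lemma sp_succ k (f0 : nat) :
  \sum_(y | (f0 < f y)%N) sp k y <= k%:R * \sum_(t | (f0 < f t)%N) g t.
Proof.
rewrite /sp exchange_big /=.
apply: (@le_trans _ _ (\sum_(Y : {ffun 'I_k -> T}) (\prod_(j < k) g (Y j)) *
           \sum_(i < k) ((f0 < f (Y i))%N)%:R)).
  apply: ler_sum => Y _; rewrite -mulr_sumr; apply: ler_wpM2l.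
    exact: prodr_ge0.
  exact: Sfun_succ.
rewrite (eq_bigr (fun Y : {ffun 'I_k -> T} => \sum_(i < k) (\prod_(j < k) g (Y j)) *
           ((f0 < f (Y i))%N)%:R)); last by move=> Y _; rewrite mulr_sumr.
rewrite exchange_big /=.
apply: le_trans (_ : \sum_(i < k) \sum_(t | (f0 < f t)%N) g t <= _).
  apply: ler_sum => i _; exact: (prod_single i (fun t => (f0 < f t)%N)).
by rewrite sumr_const card_ord mulr_natl.
Qed.

End S2.


Section S4.
Variable R : realType.

Lemma sel_sp n (mut : mutop R) (f : bits n -> nat) x k y :
  select_prob mut f x k y = sp (mut n x) f k y.
Proof. by []. Qed.

Lemma lam_update_ge1 (F s : R) b lam : 1 < F -> 0 < s -> 1 <= lam ->
  1 <= lam_update F s b lam.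
Proof.
move=> F1 s0 l1; rewrite /lam_update; case: b; first by rewrite le_max lexx.
apply: mulr_ege1 => //.
rewrite -[X in X <= _](powRr0 F); apply: ler_powR; first exact: ltW.
by rewrite invr_ge0 ltW.
Qed.

Lemma drop_bound n (mut : mutop R) (f : bits n -> nat) (F s L : R)
  (h : R -> R) (dl : R) :
  1 < F -> 0 < s -> mut_dist mut ->
  (forall l, 1 <= l -> 0 <= h l) -> (forall l, 1 <= l -> l < L -> 1 <= h l) ->
  0 <= dl ->
  (forall x l, 1 <= l -> \sum_y select_prob mut f x (nround l) y *
      h (lam_update F s (f x < f y)%N l) <= h l + dl) ->
  forall T x l, 1 <= l -> drop_prob mut f F s L T x l <= h l + T%:R * dl.
Proof.
move=> F1 s0 [m0 m1] h0 h1 d0 hstep.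
elim=> [|T IH] x l l1 /=; first by rewrite mul0r addr0 h0.
apply: (@le_trans _ _ (\sum_y select_prob mut f x (nround l) y *
    (h (lam_update F s (f x < f y)%N l) + T%:R * dl))).
  apply: ler_sum => y _; apply: ler_wpM2l.
    by rewrite sel_sp; apply: sp_ge0.
  have u1 := lam_update_ge1 (f x < f y)%N F1 s0 l1.
  case: ifP => hlt.
    apply: le_trans (h1 _ u1 hlt) _; rewrite lerDl mulr_ge0 //.
  exact: IH.
rewrite (eq_bigr (fun y => select_prob mut f x (nround l) y * h (lam_update F s (f x < f y)%N l)
     + select_prob mut f x (nround l) y * (T%:R * dl))); last by move=> y _; rewrite mulrDr.
rewrite big_split /= -mulr_suml -natr1 mulrDl mul1r.
have HB : (\sum_i select_prob mut f x (nround l) i) * (T%:R * dl) <= T%:R * dl.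
  apply: ler_piMl; first by rewrite mulr_ge0.
  rewrite (eq_bigr (fun y => sp (mut n x) f (nround l) y)) //.
  exact: sp_sum.
apply: le_trans (lerD (hstep x l l1) HB) _.
by rewrite -addrA [dl + _]addrC.
Qed.

End S4.


Section S5.
Variable R : realType.

Lemma nround_le (l : R) : 0 <= l -> (nround l)%:R <= l + 2^-1.
Proof.
move=> l0; rewrite /nround natr_absz ger0_norm ?floor_le //.
by rewrite floor_ge0 addr_ge0 // invr_ge0.
Qed.

Definition hfun (a Lp : R) (z : R) := expR (a * (ln Lp - ln z)).

Lemma step_bound n (mut : mutop R) (f : bits n -> nat) (F s Lp a th pp : R) x l :
  1 < F -> 0 < s -> mut_dist mut -> 0 <= a -> 1 <= l ->
  p_plus mut f x <= pp ->
  (ln l <= th -> (l + 2^-1) * pp * expR (a * ln F) + expR (- (a * (ln F / s))) <= 1) ->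
  \sum_y select_prob mut f x (nround l) y * hfun a Lp (lam_update F s (f x < f y)%N l)
   <= hfun a Lp l + expR (a * (ln Lp + ln F - th)).
Proof.
move=> F1 s0 [m0 m1] a0 l1 hpp hcond.
have F0 : 0 < F by apply: lt_trans F1.
have l0 : 0 < l by apply: lt_le_trans l1.
set h := hfun a Lp.
set E1 := expR (a * ln F).
set E2 := expR (- (a * (ln F / s))).
have hge0 : forall z, 0 <= h z by move=> z; exact: expR_ge0.
have hsucc : h (Num.max 1 (l / F)) <= h l * E1.
  rewrite /h /hfun /E1 -expRD ler_expR -mulrDr ler_wpM2l //.
  have lF0 : 0 < l / F by rewrite divr_gt0.
  have -> : ln l = ln (l / F) + ln F.
    by rewrite ln_div ?subrK // posrE.
  rewrite opprD addrA subrK lerB // ler_ln ?posrE ?le_max ?lexx ?orbT //.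
  by apply: lt_le_trans lF0 _; rewrite le_max lexx orbT.
have hfail : h (F `^ s^-1 * l) = h l * E2.
  rewrite /h /hfun /E2 -expRD -mulrN -mulrDr lnM ?posrE ?powR_gt0 //.
  congr expR; congr (_ * _); by rewrite ln_powR opprD addrA addrAC [s^-1 * _]mulrC.
have lnF0 : 0 <= ln F by rewrite ln_ge0 // ltW.
have E1ge1 : 1 <= E1.
  by rewrite /E1 -expR0 ler_expR mulr_ge0.
have E2le1 : E2 <= 1.
  by rewrite /E2 -expR0 ler_expR oppr_le0 mulr_ge0 // divr_ge0 // ltW.
have E2ge0 : 0 <= E2 by exact: expR_ge0.
set sp' := fun y => select_prob mut f x (nround l) y.
have sp0 : forall y, 0 <= sp' y by move=> y; rewrite /sp' sel_sp; apply: sp_ge0.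
set q := \sum_(y | (f x < f y)%N) sp' y.
set r := \sum_(y | ~~ (f x < f y)%N) sp' y.
have q0 : 0 <= q by apply: sumr_ge0.
have r0 : 0 <= r by apply: sumr_ge0.
have qr1 : q + r <= 1.
  have -> : q + r = \sum_y sp' y by rewrite [RHS](bigID (fun y => (f x < f y)%N)).
  rewrite /sp'.
  rewrite (eq_bigr (fun y => sp (mut n x) f (nround l) y)) //.
  by apply: sp_sum => [t|]; [exact: m0|exact: m1].
have Hq : q <= (l + 2^-1) * pp.
  apply: (@le_trans _ _ ((nround l)%:R * p_plus mut f x)).
    rewrite /q /sp' (eq_bigr (fun y => sp (mut n x) f (nround l) y)) //.
    by apply: sp_succ => [t|]; [exact: m0|exact: m1].
  have pp0 : 0 <= p_plus mut f x by apply: sumr_ge0 => y _; exact: m0.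
  apply: ler_pM => //; first exact: nround_le (ltW l0).
have Hsum : \sum_y sp' y * h (lam_update F s (f x < f y)%N l) <= q * (h l * E1) + r * (h l * E2).
  rewrite (bigID (fun y => (f x < f y)%N)) /=; apply: lerD.
    rewrite /q mulr_suml; apply: ler_sum => y hy; rewrite /lam_update hy.
    by apply: ler_wpM2l => //.
  rewrite /r mulr_suml; apply: ler_sum => y hy; rewrite /lam_update (negbTE hy).
  by rewrite hfail.
apply: le_trans Hsum _.
have [hl|hl] := lerP (ln l) th.
  have Hc := hcond hl.
  have hl0 := hge0 l.
  have r1 : r <= 1 by apply: le_trans qr1; rewrite lerDr.
  apply: (@le_trans _ _ (h l)); last by rewrite lerDl expR_ge0.
  apply: (@le_trans _ _ ((l + 2^-1) * pp * (h l * E1) + 1 * (h l * E2))).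
    apply: lerD; apply: ler_wpM2r => //; by rewrite mulr_ge0 // (le_trans _ E1ge1).
  have -> : (l + 2^-1) * pp * (h l * E1) + 1 * (h l * E2) =
            h l * ((l + 2^-1) * pp * E1 + E2) by ring.
  by rewrite -[X in _ <= X]mulr1 ler_wpM2l.
have hl0 := hge0 l.
apply: (@le_trans _ _ (h l * E1)).
  apply: (@le_trans _ _ (q * (h l * E1) + r * (h l * E1))).
    apply: lerD => //; apply: ler_wpM2l => //; apply: ler_wpM2l => //.
    exact: le_trans E2le1 E1ge1.
  rewrite -mulrDl; apply: ler_piMl => //; by rewrite mulr_ge0 // (le_trans _ E1ge1).
apply: (@le_trans _ _ (expR (a * (ln Lp + ln F - th)))); last by rewrite lerDr.
rewrite /h /hfun /E1 -expRD ler_expR.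
have -> : a * (ln Lp - ln l) + a * ln F = a * (ln Lp + ln F - ln l) by ring.
by rewrite ler_wpM2l // lerB // ltW.
Qed.
End S5.


Section S6.
Variable R : realType.

Lemma ln_le_gen (x y : R) : 0 <= x -> x <= y -> 1 <= y -> ln x <= ln y.
Proof.
move=> x0 xy y1; have [hx|hx] := lerP x 1.
  by apply: le_trans (ln_le0 hx) (ln_ge0 y1).
have x0' : 0 < x by apply: lt_trans hx.
by rewrite ler_ln // posrE; apply: lt_le_trans xy.
Qed.

Lemma expR_lb (x : R) : x <= expR x.
Proof. by apply: le_trans (expR_ge1Dx x); rewrite lerDr. Qed.

Definition Kc (s gamma : R) := 1 + 4 * (ln (2 * (s + 1)) + 2) / ln gamma.
Definition thr1 (s eps gamma F : R) :=
  8 * (ln (Kc s gamma) - 2 * ln (eps / 16) + ln F) / eps.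

Lemma lp_bound (s eps gamma F l dd nu : R) :
  0 < s -> 0 < eps -> 1 < gamma -> 1 < F -> 1 <= l -> 0 < nu -> ln nu = l ->
  0 <= dd -> ln (dd + 1) <= l * l -> thr1 s eps gamma F <= l ->
  ln (Num.max (4 * Num.max (logb gamma (2 * dd * (s + 1))) (logb gamma (nu * ln nu))) 1)
    <= eps * l / 4 - ln F.
Proof.
move=> s0 e0 g1 F1 l1 nu0 lnu d0 hd hthr.
have l0 : 0 < l by apply: lt_le_trans l1.
have lg0 : 0 < ln gamma by apply: ln_gt0.
set ilg := (ln gamma)^-1.
have ilg0 : 0 < ilg by rewrite invr_gt0.
set K0 := ln (2 * (s + 1)).
have K00 : 0 <= K0 by rewrite ln_ge0 //; lra.
have hA : logb gamma (2 * dd * (s + 1)) <= (K0 + l * l) * ilg.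
  rewrite /logb ler_pM2r //.
  apply: (@le_trans _ _ (ln (2 * (s + 1) * (dd + 1)))).
    apply: ln_le_gen; [| |]; nra.
  rewrite lnM ?posrE; [|lra|lra]; rewrite /K0; lra.
have hB : logb gamma (nu * ln nu) <= (2 * (l * l)) * ilg.
  rewrite /logb ler_pM2r // lnu lnM ?posrE // lnu.
  have := ln_sublinear l0; nra.
have hmax : Num.max (logb gamma (2 * dd * (s + 1))) (logb gamma (nu * ln nu))
    <= (K0 + 2 * (l * l)) * ilg.
  rewrite ge_max; apply/andP; split.
    by apply: le_trans hA _; rewrite ler_pM2r //; nra.
  by apply: le_trans hB _; rewrite ler_pM2r //; nra.
have hLp : Num.max (4 * Num.max (logb gamma (2 * dd * (s + 1))) (logb gamma (nu * ln nu))) 1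
    <= Kc s gamma * (l * l).
  have e1 : Kc s gamma * (l * l) = l * l + 4 * (K0 + 2) * ilg * (l * l).
    by rewrite /Kc /K0 /ilg; ring.
  have ll1 : 0 <= l * l - 1 by rewrite subr_ge0 mulr_ege1.
  have e2 : K0 <= K0 * (l * l).
    have := mulr_ge0 K00 ll1; lra.
  rewrite e1 ge_max; apply/andP; split.
    apply: (@le_trans _ _ (4 * ((K0 + 2 * (l * l)) * ilg))); first by lra.
    have : (K0 + 2 * (l * l)) * ilg <= (K0 + 2) * (l * l) * ilg.
      rewrite ler_pM2r //; nra.
    nra.
  have : 0 <= 4 * (K0 + 2) * ilg * (l * l) by apply: mulr_ge0; [apply: mulr_ge0|]; nra.
  nra.
have Kc0 : 1 <= Kc s gamma.
  rewrite /Kc lerDl; apply: mulr_ge0; last by rewrite invr_ge0 ltW.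
  by rewrite mulr_ge0 //; rewrite -/K0; lra.
apply: (@le_trans _ _ (ln (Kc s gamma * (l * l)))).
  apply: ln_le_gen => //; first by rewrite le_max ler01 orbT.
  by rewrite mulr_ege1 // mulr_ege1.
rewrite lnM ?posrE ?mulr_gt0 //; last by apply: lt_le_trans Kc0.
rewrite lnM ?posrE //.
set t := eps / 16.
have t0 : 0 < t by rewrite /t divr_gt0.
have hl : ln l <= t * l - ln t.
  have := ln_sublinear (mulr_gt0 t0 l0); rewrite lnM ?posrE //; lra.
have H8 : ln (Kc s gamma) - 2 * ln t + ln F <= eps * l / 8.
  move: hthr; rewrite /thr1 -/t ler_pdivrMr // [l * eps]mulrC; lra.
move: hl H8; rewrite /t; lra.
Qed.

End S6.


Section S7.
Variable R : realType.

Lemma powR_expR (a x : R) : 0 < a -> a `^ x = expR (x * ln a).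
Proof. by move=> a0; rewrite /powR gt_eqF. Qed.

Lemma expR_ge1 (x : R) : 0 <= x -> 1 <= expR x.
Proof. by move=> x0; apply: le_trans (expR_ge1Dx x); rewrite lerDl. Qed.

Lemma cond_lemma (eps l s Cabs z : R) : 0 < eps -> 0 < s -> 0 <= Cabs -> 1 <= z ->
  32 * Cabs / eps <= l -> 8 * s / eps <= l -> ln z <= 3 * eps * l / 4 ->
  (z + 2^-1) * (Cabs * expR (- (eps * l))) * expR (eps * l / 8)
    + expR (- (eps * l / (8 * s))) <= 1.
Proof.
move=> e0 s0 C0 z1 hC hs hz.
have z0 : 0 < z by lra.
have ez : z <= expR (3 * eps * l / 4) by rewrite -(lnK z0) ler_expR.
have A : z + 2^-1 <= 2 * expR (3 * eps * l / 4) by lra.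
set Y := expR (eps * l / 8).
have Y0 : 0 < Y by apply: expR_gt0.
have EE : expR (3 * eps * l / 4) * expR (- (eps * l)) * Y = Y^-1.
  by rewrite /Y -!expRD -expRN; congr expR; lra.
have E : 2 * expR (3 * eps * l / 4) * (Cabs * expR (- (eps * l))) * Y = 2 * Cabs / Y.
  rewrite -EE; ring.
have h1 : (z + 2^-1) * (Cabs * expR (- (eps * l))) * Y <= 2 * Cabs / Y.
  rewrite -E; apply: ler_wpM2r; first exact: ltW.
  by apply: ler_wpM2r => //; rewrite mulr_ge0 // expR_ge0.
have h2 : 2 * Cabs / Y <= 2^-1.
  rewrite ler_pdivrMr //.
  have : eps * l / 8 <= Y by apply: expR_lb.
  move: hC; rewrite ler_pdivrMr // => hC.
  have : 4 * Cabs <= eps * l / 8 by rewrite [eps * l]mulrC; lra.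
  lra.
have h3 : expR (- (eps * l / (8 * s))) <= 2^-1.
  have hx : 1 <= eps * l / (8 * s).
    rewrite ler_pdivlMr ?mulr_gt0 // mul1r.
    by move: hs; rewrite ler_pdivrMr // [l * eps]mulrC.
  have := expR_ge1Dx (eps * l / (8 * s)).
  set W := expR (eps * l / (8 * s)) => hW.
  have W0 : 0 < W by apply: expR_gt0.
  rewrite expRN -/W.
  rewrite lef_pV2 ?posrE //; lra.
lra.
Qed.

End S7.

Theorem lemma3p3 (R : realType) (F s eps gamma : R)
  (mut : mutop R) (f : forall n : nat, bits n -> nat) (d : nat -> nat) :
  1 < F -> 0 < s -> 0 < eps < 1 -> 1 < gamma ->
  (* mutation operator: standard bit mutation with p in O(1/n) cap n^-O(1),
     or heavy-tailed mutation with constant beta > 1 *)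
  ((exists p : nat -> R,
      (forall n, 0 <= p n <= 1) /\
      (exists C : R, exists N : nat, forall n : nat, (N <= n)%N -> p n <= C / n%:R) /\
      (exists C : R, exists N : nat, forall n : nat, (N <= n)%N ->
          (n%:R : R) `^ (- C) <= p n) /\
      mut = std_mut p)
   \/ (exists beta : R, 1 < beta /\ mut = @heavy_mut R beta)) ->
  (* f takes values in {0,..,d} with global optima at value d *)
  (forall n (x : bits n), (f n x <= d n)%N) ->
  (forall n, exists x : bits n, f n x = d n) ->
  (* d + 1 = n^{o(log n)} *)
  @quasi_small R (fun n => (d n).+1) ->
  (* f is everywhere hard with constant eps *)
  (exists C : R, exists N : nat, forall n : nat, (N <= n)%N ->
     forall x : bits n, (f n x < d n)%N ->
       p_plus mut (f n) x <= C * (n%:R : R) `^ (- eps)) ->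
  (* p_x^- <= 1/gamma for all non-optimal x *)
  (exists N : nat, forall n : nat, (N <= n)%N ->
     forall x : bits n, (f n x < d n)%N -> p_minus mut (f n) x <= gamma^-1) ->
  let lambda1 := fun n : nat =>
    4 * Num.max (logb gamma (2 * (d n)%:R * (s + 1)))
                (logb gamma (n%:R * ln (n%:R : R))) in
  let lambda2 := fun n : nat => (n%:R : R) `^ (eps / 2) in
  forall T : nat -> nat, @quasi_small R T ->
  exists c : R, 0 < c /\ exists N : nat, forall n : nat, (N <= n)%N ->
    forall (x0 : bits n) (lam0 : R), lambda2 n <= lam0 ->
      drop_prob mut (f n) F s (lambda1 n) (T n) x0 lam0
        <= (n%:R : R) `^ (- c * ln (n%:R : R)).
Proof.
move=> HF Hs /andP[e0 e1] Hg Hmut Hfd Hopt Hd [C [N1 Hhard]] _ lambda1 lambda2 T HT.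
have Hdist : mut_dist mut.
  case: Hmut => [[p [hp [_ [_ ->]]]] | [beta [_ ->]]]; [exact: std_dist | exact: heavy_dist].
have F0 : 0 < F by lra.
set lnF := ln F.
have lnF0 : 0 < lnF by apply: ln_gt0.
set kap := eps / (8 * lnF).
have kap0 : 0 < kap by rewrite /kap divr_gt0 // mulr_gt0.
set c := eps * kap / 8.
have c0 : 0 < c by rewrite /c divr_gt0 // mulr_gt0.
exists c; split => //.
have [Nd HNd] := Hd 1 ltr01.
have c2 : 0 < 2 * c by lra.
have [NT HNT] := HT (2 * c) c2.
set M := Num.max 1 (Num.max (c^-1) (Num.max (32 * `|C| / eps)
           (Num.max (8 * s / eps) (thr1 s eps gamma F)))).
exists (maxn (Num.truncn (expR M)).+1 (maxn Nd (maxn NT N1))).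
move=> n; rewrite !geq_max => /and4P[hn0 hnd hnT hn1] x0 lam0 hlam0.
have nM : expR M < n%:R.
  apply: lt_le_trans (truncnS_gt _) _; by rewrite ler_nat.
have n0 : 0 < (n%:R : R) by apply: lt_trans nM; apply: expR_gt0.
set l := ln (n%:R : R).
have lM : M <= l.
  by rewrite -[M]expRK ler_ln ?posrE ?expR_gt0 // ltW.
move: lM; rewrite /M !ge_max => /and5P[l1 lc lC ls lthr].
have l0 : 0 < l by lra.
have hdn : ln ((d n)%:R + 1) <= l * l.
  have := HNd n hnd; rewrite powR_expR // mul1r -/l => h.
  rewrite -[l * l]expRK; apply: ln_le_gen; first by rewrite addr_ge0.
    by rewrite -natr1 in h.
  by apply: expR_ge1; rewrite mulr_ge0 // ltW.
set Lp := Num.max (lambda1 n) 1.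
have hLp : ln Lp <= eps * l / 4 - lnF.
  by apply: lp_bound => //.
have Lp1 : 1 <= Lp by rewrite /Lp le_max lexx orbT.
set a := kap * l.
have a0 : 0 <= a by rewrite mulr_ge0 // ltW.
have alnF : a * lnF = eps * l / 8.
  rewrite /a /kap; field; rewrite gt_eqF //.
set th := 3 * eps * l / 4.
set pp := `|C| * expR (- (eps * l)).
set dl := expR (a * (ln Lp + ln F - th)).
have lam2 : lambda2 n = expR (eps / 2 * l) by rewrite /lambda2 powR_expR.
have lam01 : 1 <= lam0.
  apply: le_trans hlam0; rewrite lam2; apply: expR_ge1; apply: mulr_ge0; lra.
have Hdb : drop_prob mut (f n) F s (lambda1 n) (T n) x0 lam0 <= hfun a Lp lam0 + (T n)%:R * dl.
  apply: drop_bound => //.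
  - by move=> z _; apply: expR_ge0.
  - move=> z z1 zL; rewrite /hfun; apply: expR_ge1; rewrite mulr_ge0 // subr_ge0.
    rewrite ler_ln ?posrE; [|lra|lra].
    apply: ltW; apply: lt_le_trans zL _; by rewrite /Lp le_max lexx.
  - by apply: expR_ge0.
  move=> x z z1.
  apply: (@step_bound R n mut (f n) F s Lp a th pp x z HF Hs Hdist a0 z1).
    have [hx|hx] := ltnP (f n x) (d n).
      apply: le_trans (Hhard n hn1 x hx) _.
      rewrite powR_expR // -/l /pp mulNr; apply: ler_wpM2r; first exact: expR_ge0.
      exact: ler_norm.
    rewrite /p_plus big1; first by rewrite /pp mulr_ge0 // expR_ge0.
    move=> y hy; have := leq_ltn_trans hx hy.
    by rewrite ltnNge Hfd.
  move=> hz.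
  have := @cond_lemma R eps l s `|C| z e0 Hs (normr_ge0 _) z1 lC ls hz.
  have alnFs : a * (lnF / s) = eps * l / (8 * s).
    by rewrite mulrA alnF; field; rewrite gt_eqF.
  by rewrite /pp -/lnF alnF alnFs.
apply: le_trans Hdb _.
have hH : hfun a Lp lam0 <= expR (- (2 * c * l * l)).
  rewrite /hfun ler_expR.
  have hl0 : eps / 2 * l <= ln lam0.
    rewrite -[eps / 2 * l]expRK ler_ln ?posrE ?expR_gt0 -?lam2 //; lra.
  have : a * (ln Lp - ln lam0) <= a * (- (eps * l / 4)).
    by apply: ler_wpM2l => //; lra.
  have -> : - (2 * c * l * l) = a * (- (eps * l / 4)).
    by rewrite /a /c; field.
  done.
have hT : (T n)%:R * dl <= expR (- (2 * c * l * l)).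
  have hTn := HNT n hnT; rewrite powR_expR // -/l in hTn.
  have hdl : dl <= expR (- (4 * c * l * l)).
    rewrite /dl ler_expR.
    have -> : - (4 * c * l * l) = a * (- (eps * l / 2)) by rewrite /a /c; field.
    by apply: ler_wpM2l => //; rewrite /th -/lnF; lra.
  apply: le_trans (ler_pM (ler0n _ _) (expR_ge0 _) hTn hdl) _.
  by rewrite -expRD ler_expR le_eqVlt; apply/orP; left; apply/eqP; ring.
rewrite powR_expR // -/l.
have cl : 1 <= c * l * l.
  have h1 : 1 <= c * l.
    by have := ler_wpM2l (ltW c0) lc; rewrite mulfV ?gt_eqF.
  have := mulr_ge0 (le_trans ler01 h1) (_ : 0 <= l - 1); rewrite subr_ge0 => /(_ l1).
  rewrite mulrBr mulr1 subr_ge0; lra.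
apply: le_trans (lerD hH hT) _.
have e2 : 2 <= expR (c * l * l) by apply: le_trans (expR_ge1Dx _); lra.
have -> : expR (- c * l * l) = expR (c * l * l) * expR (- (2 * c * l * l)).
  by rewrite -expRD; congr expR; ring.
have ee := expR_ge0 (- (2 * c * l * l)).
have e2' : 0 <= expR (c * l * l) - 2 by rewrite subr_ge0.
have := mulr_ge0 e2' ee.
set E := expR (- (2 * c * l * l)).
set G := expR (c * l * l).
rewrite mulrBl => hh; lra.
Qed.
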